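(* Assume the demand is i.i.d. with pmf $P_X$. Let $\theta\in\mathcal P_S$, $\xi(w)=\sum_{(x,s):s-x=w}P_X(x)\theta(s)$, and suppose $S_1\sim\theta$. If the constant-distribution policy $\mathbf b=(b,b,\dots)$, $b\in\mathcal B$, is invariant for the initial distribution $\theta$, then for every horizon $T$, $$L_T(\mathbf b)=I(W_1;Y_1)=I(b;\xi).$$
   Context: $\mathcal X=\{0,\dots,m_x\}$, $\mathcal Y=\{0,\dots,m_y\}$, $\mathcal S=\{0,\dots,m_s\}$ with $m_x\le m_y$; $\mathcal W=\{s-x:s\in\mathcal S,x\in\mathcal X\}$; $\mathcal P_S$ the pmfs on $\mathcal S$; $\mathcal Y_\circ(w)=\{y\in\mathcal Y:w+y\in\mathcal S\}$; $\mathcal B$ the conditional pmfs $b(y\mid w)$ with $b(\mathcal Y_\circ(w)\mid w)=1$. Demand $X_t$ i.i.d. $\sim P_X$ independent of $S_1$. The constant-distribution policy $b$ draws $Y_t\sim b(\cdot\mid W_t)$ with $W_t=S_t-X_t$, and $S_{t+1}=S_t+Y_t-X_t$. Let $\theta_t(s)=P(S_t=s\mid Y^{t-1}=y^{t-1})$ and $\xi_t(w)=P(W_t=w\mid Y^{t-1}=y^{t-1})$. The policy $b$ is invariant for initial distribution $\theta_1$ if $\theta_t=\theta_1$ and $\xi_t=\xi_1$ for all $t$ (for all realizations $y^{t-1}$ of positive probability), where $\xi_1(w)=\sum_{(x,s):s-x=w}P_X(x)\theta_1(s)$. $L_T(\mathbf b)=\frac1TI(X^T,S_1;Y^T)$;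 $I(b;\xi)$ is the mutual information between $W\sim\xi$ and $Y\sim b(\cdot\mid W)$. *)

(* Defs.v *)
From HB Require Import structures.
From mathcomp Require Import all_boot all_order all_algebra.
From mathcomp Require Import reals exp.
Set Implicit Arguments. Unset Strict Implicit. Unset Printing Implicit Defensive.
Import Order.TTheory GRing.Theory Num.Theory.
Local Open Scope ring_scope.

Definition MI (R : realType) (A B : finType) (p : A -> B -> R) : R :=
  \sum_(a : A) \sum_(b : B)
     (if p a b == 0 then 0
      else p a b * ln (p a b / ((\sum_(b' : B) p a b') * (\sum_(a' : A) p a' b)))).

Definition is_pmf (R : realType) (A : finType) (p : A -> R) : Prop :=
  (forall a, 0 <= p a) /\ \sum_(a : A) p a = 1.

Definition fat (A : Type) (T : nat) (f : {ffun 'I_T -> A}) (d : A) (t : nat) : A :=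
  if insub t is Some i then f i else d.

Section Inventory.
Variables (R : realType) (mx my ms : nat).

(* X = {0..mx}, Y = {0..my}, S = {0..ms}.
   W = {s - x} = {-mx, ..., ms} is encoded by k : 'I_(mx+ms).+1 with w = k - mx. *)
Definition Wt := 'I_(mx + ms).+1.
Definition wval (k : Wt) : int := (k%:Z - mx%:Z)%R.

Definition wenc (s : 'I_ms.+1) (x : 'I_mx.+1) : Wt := inord (s + mx - x)%N.

(* S_{t+1} = S_t + Y_t - X_t (only reached with positive probability inside S) *)
Definition snext (s : 'I_ms.+1) (x : 'I_mx.+1) (y : 'I_my.+1) : 'I_ms.+1 :=
  inord (s + y - x)%N.

(* y \in Y_o(w)  <->  w + y \in S, i.e. 0 <= (k - mx) + y <= ms *)
Definition in_Yo (w : Wt) (y : 'I_my.+1) : bool := (mx <= w + y <= mx + ms)%N.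

Definition is_policy (b : Wt -> 'I_my.+1 -> R) : Prop :=
  forall w, is_pmf (b w) /\ \sum_(y | in_Yo w y) b w y = 1.

Definition xi (PX : 'I_mx.+1 -> R) (theta : 'I_ms.+1 -> R) (w : Wt) : R :=
  \sum_(s : 'I_ms.+1) \sum_(x : 'I_mx.+1 | wenc s x == w) PX x * theta s.

(* state trajectory: state s1 xs ys t = S_{t+1} (0-based t) *)
Fixpoint state (s1 : 'I_ms.+1) (xs : nat -> 'I_mx.+1) (ys : nat -> 'I_my.+1)
  (t : nat) : 'I_ms.+1 :=
  match t with
  | 0 => s1
  | t'.+1 => snext (state s1 xs ys t') (xs t') (ys t')
  end.

Definition stateF (T : nat) (s1 : 'I_ms.+1) (xs : {ffun 'I_T -> 'I_mx.+1})
  (ys : {ffun 'I_T -> 'I_my.+1}) (t : nat) : 'I_ms.+1 :=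
  state s1 (fat xs ord0) (fat ys ord0) t.

(* joint pmf of (S_1, X^T, Y^T) under the constant-distribution policy b:
   theta(s1) prod_t P_X(x_t) b(y_t | s_t - x_t) *)
Definition pjoint (T : nat) (PX : 'I_mx.+1 -> R) (theta : 'I_ms.+1 -> R)
  (b : Wt -> 'I_my.+1 -> R) (s1 : 'I_ms.+1) (xs : {ffun 'I_T -> 'I_mx.+1})
  (ys : {ffun 'I_T -> 'I_my.+1}) : R :=
  theta s1 * \prod_(t < T) (PX (xs t) * b (wenc (stateF s1 xs ys t) (xs t)) (ys t)).

(* P(S_{n+1} = s, Y^n = ys) *)
Definition jointSY (n : nat) PX theta b (s : 'I_ms.+1) (ys : {ffun 'I_n -> 'I_my.+1}) : R :=
  \sum_(s1 : 'I_ms.+1) \sum_(xs : {ffun 'I_n -> 'I_mx.+1} | stateF s1 xs ys n == s)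
     pjoint PX theta b s1 xs ys.

Definition pY (n : nat) PX theta b (ys : {ffun 'I_n -> 'I_my.+1}) : R :=
  \sum_(s : 'I_ms.+1) jointSY PX theta b s ys.

(* P(W_{n+1} = w, Y^n = ys), W_{n+1} = S_{n+1} - X_{n+1}, X_{n+1} ~ P_X independent *)
Definition jointWY (n : nat) PX theta b (w : Wt) (ys : {ffun 'I_n -> 'I_my.+1}) : R :=
  \sum_(s : 'I_ms.+1) \sum_(x : 'I_mx.+1 | wenc s x == w) jointSY PX theta b s ys * PX x.

(* invariance: theta_t = theta_1 (= theta) and xi_t = xi_1 for all t and all
   y^{t-1} of positive probability (t = n+1) *)
Definition invariant_for PX theta b : Prop :=
  forall (n : nat) (ys : {ffun 'I_n -> 'I_my.+1}), 0 < pY PX theta b ys ->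
    (forall s, jointSY PX theta b s ys / pY PX theta b ys = theta s) /\
    (forall w, jointWY PX theta b w ys / pY PX theta b ys = xi PX theta w).

Definition LT (T : nat) PX theta b : R :=
  MI (fun (a : ('I_ms.+1 * {ffun 'I_T -> 'I_mx.+1})%type) (ys : {ffun 'I_T -> 'I_my.+1}) =>
        pjoint PX theta b a.1 a.2 ys) / T%:R.

Definition IW1Y1 PX theta b : R :=
  MI (fun (w : Wt) (y : 'I_my.+1) =>
    \sum_(s1 : 'I_ms.+1) \sum_(xs : {ffun 'I_1 -> 'I_mx.+1})
      \sum_(ys : {ffun 'I_1 -> 'I_my.+1} | (wenc s1 (xs ord0) == w) && (ys ord0 == y))
        pjoint PX theta b s1 xs ys).

Definition Ib (b : Wt -> 'I_my.+1 -> R) (q : Wt -> R) : R :=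
  MI (fun (w : Wt) (y : 'I_my.+1) => q w * b w y).

End Inventory.

(* Main.v *)
Require Import Defs.
From HB Require Import structures.
From mathcomp Require Import all_boot all_order all_algebra.
From mathcomp Require Import reals exp.
Import Order.TTheory GRing.Theory Num.Theory.
Local Open Scope ring_scope.
Set Implicit Arguments. Unset Strict Implicit. Unset Printing Implicit Defensive.

Definition ext (A : Type) (n : nat) (g : {ffun 'I_n -> A}) (a : A) : {ffun 'I_n.+1 -> A} :=
  [ffun i : 'I_n.+1 => fat g a i].
Definition restr (A : Type) (n : nat) (f : {ffun 'I_n.+1 -> A}) : {ffun 'I_n -> A} :=
  [ffun i : 'I_n => f (widen_ord (leqnSn n) i)].

Lemma fat_lt (A : Type) n (g : {ffun 'I_n -> A}) d i (H : (i < n)%N) :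
  fat g d i = g (Ordinal H).
Proof. by rewrite /fat insubT. Qed.

Lemma fat_ge (A : Type) n (g : {ffun 'I_n -> A}) d i : (n <= i)%N -> fat g d i = d.
Proof. by move=> H; rewrite /fat insubF // ltnNge H. Qed.

Lemma fat_ord (A : Type) n (g : {ffun 'I_n -> A}) d (i : 'I_n) : fat g d i = g i.
Proof. by rewrite (fat_lt _ _ (ltn_ord i)); congr (g _); apply: val_inj. Qed.

Lemma ext_widen (A : Type) n (g : {ffun 'I_n -> A}) a (i : 'I_n) :
  ext g a (widen_ord (leqnSn n) i) = g i.
Proof. by rewrite ffunE /= fat_ord. Qed.

Lemma ext_max (A : Type) n (g : {ffun 'I_n -> A}) a : ext g a ord_max = a.
Proof. by rewrite ffunE fat_ge. Qed.

Lemma fat_ext (A : Type) n (g : {ffun 'I_n -> A}) a d i : (i < n)%N ->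
  fat (ext g a) d i = fat g d i.
Proof.
move=> H; have H1 : (i < n.+1)%N by apply: ltnW.
by rewrite (fat_lt _ _ H1) ffunE /= !(fat_lt _ _ H).
Qed.

Lemma restr_ext (A : Type) n (g : {ffun 'I_n -> A}) a : restr (ext g a) = g.
Proof. by apply/ffunP => i; rewrite ffunE ext_widen. Qed.

Lemma ext_restr (A : Type) n (f : {ffun 'I_n.+1 -> A}) : ext (restr f) (f ord_max) = f.
Proof.
apply/ffunP => i; rewrite ffunE.
have [H|H] := ltnP i n.
  rewrite (fat_lt _ _ H) ffunE; congr (f _); exact: val_inj.
rewrite fat_ge //; congr (f _); apply: val_inj => /=.
by apply/eqP; rewrite eqn_leq H -ltnS ltn_ord.
Qed.

Lemma sum_ext (R : realType) (A : finType) n (F : {ffun 'I_n.+1 -> A} -> R) :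
  \sum_(f : {ffun 'I_n.+1 -> A}) F f = \sum_(g : {ffun 'I_n -> A}) \sum_(a : A) F (ext g a).
Proof.
rewrite pair_big /=.
rewrite (reindex (fun p : {ffun 'I_n -> A} * A => ext p.1 p.2)) //=.
exists (fun f => (restr f, f ord_max)) => [[g a] _|f _] /=.
  by rewrite restr_ext ext_max.
exact: ext_restr.
Qed.

Lemma sum_ffun0 (R : realType) (A : finType) (F : {ffun 'I_0 -> A} -> R) g0 :
  \sum_(g : {ffun 'I_0 -> A}) F g = F g0.
Proof.
rewrite (eq_bigr (fun _ => F g0)); last first.
  by move=> g _; congr F; apply/ffunP => -[].
by rewrite sumr_const card_ffun card_ord expn0.
Qed.

Lemma MI_ext (R : realType) (A B : finType) (p p' : A -> B -> R) :
  (forall a c, p a c = p' a c) -> MI p = MI p'.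
Proof.
move=> H; rewrite /MI; apply: eq_bigr => a _; apply: eq_bigr => c _.
by rewrite !H; congr (if _ then _ else _ * ln (_ / (_ * _)));
  apply: eq_bigr => *; rewrite H.
Qed.

Lemma sum_part (R : realType) (I J : finType) (h : I -> J) (F : I -> J -> R) :
  \sum_(j : J) \sum_(i | h i == j) F i j = \sum_(i : I) F i (h i).
Proof.
rewrite (partition_big h predT) //=; apply: eq_bigr => j _.
by apply: eq_bigr => i /eqP <-.
Qed.

Lemma ln_prod (R : realType) n (F : 'I_n -> R) : (forall i, 0 < F i) ->
  ln (\prod_(i < n) F i) = \sum_(i < n) ln (F i).
Proof.
elim: n F => [|n IH] F HF; first by rewrite !big_ord0 ln1.
rewrite !big_ord_recr /= lnM ?IH // posrE //.
exact: prodr_gt0.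
Qed.

Section Model.
Variables (R : realType) (mx my ms : nat).
Variables (PX : 'I_mx.+1 -> R) (theta : 'I_ms.+1 -> R) (b : Wt mx ms -> 'I_my.+1 -> R).
Hypotheses (hPX : is_pmf PX) (hth : is_pmf theta) (hb : is_policy b).

Local Notation X := 'I_mx.+1.
Local Notation Y := 'I_my.+1.
Local Notation S := 'I_ms.+1.
Local Notation pj := (pjoint PX theta b).

Lemma state_ext (s1 : S) (xs xs' : nat -> X) (ys ys' : nat -> Y) t :
  (forall i, (i < t)%N -> xs i = xs' i) -> (forall i, (i < t)%N -> ys i = ys' i) ->
  state s1 xs ys t = state s1 xs' ys' t.
Proof.
elim: t => [//|t IH] Hx Hy /=.
rewrite IH ?Hx ?Hy // => i Hi; [apply: Hx|apply: Hy]; exact: ltnW.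
Qed.

Lemma stateF_ext n (s1 : S) (xs : {ffun 'I_n -> X}) (ys : {ffun 'I_n -> Y}) x y t :
  (t <= n)%N -> stateF s1 (ext xs x) (ext ys y) t = stateF s1 xs ys t.
Proof.
move=> Ht; apply: state_ext => i Hi; apply: fat_ext; exact: leq_trans Hi Ht.
Qed.

Lemma pjoint_ext n (s1 : S) (xs : {ffun 'I_n -> X}) (ys : {ffun 'I_n -> Y}) x y :
  pj s1 (ext xs x) (ext ys y) =
  pj s1 xs ys * (PX x * b (wenc (stateF s1 xs ys n) x) y).
Proof.
rewrite /pjoint big_ord_recr /= mulrA; congr (_ * _ * _).
  apply: eq_bigr => i _; rewrite !ext_widen stateF_ext //; exact: ltnW.
by rewrite !ext_max stateF_ext.
Qed.

Lemma b_ge0 w y : 0 <= b w y. Proof. by case: (hb w) => -[]. Qed.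
Lemma sum_b w : \sum_y b w y = 1. Proof. by case: (hb w) => -[]. Qed.
Lemma PX_ge0 x : 0 <= PX x. Proof. by case: hPX. Qed.
Lemma th_ge0 s : 0 <= theta s. Proof. by case: hth. Qed.

Lemma pj_ge0 n (s1 : S) (xs : {ffun 'I_n -> X}) ys : 0 <= pj s1 xs ys.
Proof.
rewrite /pjoint mulr_ge0 ?th_ge0 //; apply: prodr_ge0 => i _.
by rewrite mulr_ge0 ?PX_ge0 ?b_ge0.
Qed.

Lemma sumXY1 (G : X -> Wt mx ms) :
  \sum_x \sum_y PX x * b (G x) y = 1.
Proof.
rewrite (eq_bigr (fun x => PX x)); first by case: hPX.
by move=> x _; rewrite -mulr_sumr sum_b mulr1.
Qed.

                      
Lemma marg_ys n (s1 : S) (xs : {ffun 'I_n -> X}) :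
  \sum_ys pj s1 xs ys = theta s1 * \prod_(t < n) PX (xs t).
Proof.
elim: n xs => [|n IH] xs.
  rewrite (sum_ffun0 _ [ffun i : 'I_0 => ord0]) /pjoint !big_ord0 //.
rewrite -(ext_restr xs) sum_ext.
rewrite (eq_bigr (fun ys => pj s1 (restr xs) ys * PX (xs ord_max))).
  rewrite -mulr_suml IH big_ord_recr /= mulrA ext_max; congr (_ * _ * _).
  by apply: eq_bigr => i _; rewrite ext_widen.
move=> ys _; rewrite (eq_bigr (fun y => pj s1 (restr xs) ys * (PX (xs ord_max) *
   b (wenc (stateF s1 (restr xs) ys n) (xs ord_max)) y))); last first.
  by move=> y _; rewrite pjoint_ext.
by rewrite -mulr_sumr -mulr_sumr sum_b mulr1.
Qed.


Hypothesis hinv : invariant_for PX theta b.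

Local Notation xiw := (xi PX theta).
Definition qf (y : Y) : R := \sum_w xiw w * b w y.

Lemma sumSY n (ys : {ffun 'I_n -> Y}) (G : S -> R) :
  \sum_s jointSY PX theta b s ys * G s =
  \sum_(s1 : S) \sum_(xs : {ffun 'I_n -> X}) pj s1 xs ys * G (stateF s1 xs ys n).
Proof.
rewrite /jointSY.
transitivity (\sum_(s : S) \sum_(s1 : S) \sum_(xs : {ffun 'I_n -> X} | stateF s1 xs ys n == s)
   pj s1 xs ys * G s).
  by apply: eq_bigr => s _; rewrite mulr_suml; apply: eq_bigr => s1 _; rewrite mulr_suml.
rewrite exchange_big; apply: eq_bigr => s1 _.
exact: (sum_part (fun xs => stateF s1 xs ys n) (fun xs s => pj s1 xs ys * G s)).
Qed.

Lemma pY_sum n (ys : {ffun 'I_n -> Y}) :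
  pY PX theta b ys = \sum_(s1 : S) \sum_(xs : {ffun 'I_n -> X}) pj s1 xs ys.
Proof.
rewrite /pY (eq_bigr (fun s => jointSY PX theta b s ys * 1)); last by move=> *; rewrite mulr1.
rewrite sumSY; apply: eq_bigr => s1 _; apply: eq_bigr => xs _; exact: mulr1.
Qed.

Lemma sumWY n (ys : {ffun 'I_n -> Y}) (H : Wt mx ms -> R) :
  \sum_w jointWY PX theta b w ys * H w =
  \sum_s jointSY PX theta b s ys * \sum_x PX x * H (wenc s x).
Proof.
rewrite /jointWY.
transitivity (\sum_(w : Wt mx ms) \sum_(s : S) \sum_(x : X | wenc s x == w)
   jointSY PX theta b s ys * PX x * H w).
  by apply: eq_bigr => w _; rewrite mulr_suml; apply: eq_bigr => s _; rewrite mulr_suml.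
rewrite exchange_big; apply: eq_bigr => s _.
rewrite (sum_part (fun x => wenc s x) (fun x w => jointSY PX theta b s ys * PX x * H w)).
by rewrite mulr_sumr; apply: eq_bigr => x _; rewrite mulrA.
Qed.

Lemma pY_ext n (ys : {ffun 'I_n -> Y}) y :
  pY PX theta b (ext ys y) = \sum_w jointWY PX theta b w ys * b w y.
Proof.
rewrite sumWY sumSY pY_sum; apply: eq_bigr => s1 _.
rewrite sum_ext; apply: eq_bigr => xs _.
rewrite mulr_sumr; apply: eq_bigr => x _.
by rewrite pjoint_ext.
Qed.

Lemma jointSY_ge0 n (ys : {ffun 'I_n -> Y}) s : 0 <= jointSY PX theta b s ys.
Proof. by apply: sumr_ge0 => s1 _; apply: sumr_ge0 => xs _; apply: pj_ge0. Qed.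

Lemma jointWY_eq n (ys : {ffun 'I_n -> Y}) w :
  jointWY PX theta b w ys = pY PX theta b ys * xiw w.
Proof.
have pge0 : 0 <= pY PX theta b ys by apply: sumr_ge0 => s _; apply: jointSY_ge0.
move: pge0; rewrite le_eqVlt => /orP [/eqP p0|ppos].
  rewrite -p0 mul0r /jointWY big1 // => s _; apply: big1 => x _.
  by rewrite (psumr_eq0P (fun s _ => jointSY_ge0 ys s) (esym p0)) ?mul0r.
have [_ H] := hinv ppos.
by rewrite -(H w) mulrC divfK // gt_eqF.
Qed.

Lemma xi_sum : \sum_w xiw w = 1.
Proof.
rewrite /xi exchange_big /=.
rewrite (eq_bigr (fun s => theta s)); first by case: hth.
move=> s _.
rewrite (sum_part (fun x => wenc s x) (fun x w => PX x * theta s)).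
by rewrite -mulr_suml; case: hPX => _ ->; rewrite mul1r.
Qed.

Lemma sum_qf : \sum_y qf y = 1.
Proof.
rewrite /qf exchange_big /= -xi_sum; apply: eq_bigr => w _.
by rewrite -mulr_sumr sum_b mulr1.
Qed.

Lemma pY_prod n (ys : {ffun 'I_n -> Y}) :
  pY PX theta b ys = \prod_(t < n) qf (ys t).
Proof.
elim: n ys => [|n IH] ys.
  rewrite big_ord0 pY_sum -(proj2 hth); apply: eq_bigr => s1 _.
  by rewrite (sum_ffun0 _ [ffun i : 'I_0 => ord0]) /pjoint big_ord0 mulr1.
rewrite -(ext_restr ys) pY_ext; symmetry; rewrite big_ord_recr /= ext_max.
rewrite (eq_bigr (fun w => pY PX theta b (restr ys) * (xiw w * b w (ys ord_max)))); last first.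
  by move=> w _; rewrite jointWY_eq mulrA.
rewrite -mulr_sumr IH; congr (_ * _).
by apply: eq_bigr => i _; rewrite ext_widen.
Qed.

Lemma prod_total n : \sum_(ys : {ffun 'I_n -> Y}) \prod_(t < n) qf (ys t) = 1.
Proof.
elim: n => [|n IH]; first by rewrite (sum_ffun0 _ [ffun i : 'I_0 => ord0]) big_ord0.
rewrite sum_ext; transitivity (\sum_(ys : {ffun 'I_n -> Y}) \prod_(t < n) qf (ys t)); last exact: IH.
apply: eq_bigr => ys _.
rewrite (eq_bigr (fun y => (\prod_(t < n) qf (ys t)) * qf y)).
  by rewrite -mulr_sumr sum_qf mulr1.
move=> y _; rewrite big_ord_recr /= ext_max; congr (_ * _).
by apply: eq_bigr => i _; rewrite ext_widen.
Qed.

Lemma pY_total n : \sum_(ys : {ffun 'I_n -> Y}) pY PX theta b ys = 1.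
Proof. by rewrite -(prod_total n); apply: eq_bigr => ys _; rewrite pY_prod. Qed.


Definition gf (w : Wt mx ms) (y : Y) : R := ln (b w y / qf y).
Definition Cst : R := \sum_w xiw w * \sum_y b w y * gf w y.

Definition Sg n (s1 : S) (xs : {ffun 'I_n -> X}) (ys : {ffun 'I_n -> Y}) : R :=
  \sum_(t < n) gf (wenc (stateF s1 xs ys t) (xs t)) (ys t).

Definition Vsum n : R :=
  \sum_(s1 : S) \sum_(xs : {ffun 'I_n -> X}) \sum_(ys : {ffun 'I_n -> Y})
    pj s1 xs ys * Sg s1 xs ys.

Lemma sum_ext2 n (F : {ffun 'I_n.+1 -> X} -> {ffun 'I_n.+1 -> Y} -> R) :
  \sum_(xs : {ffun 'I_n.+1 -> X}) \sum_(ys : {ffun 'I_n.+1 -> Y}) F xs ys =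
  \sum_(xs : {ffun 'I_n -> X}) \sum_x \sum_(ys : {ffun 'I_n -> Y}) \sum_y F (ext xs x) (ext ys y).
Proof.
rewrite sum_ext; apply: eq_bigr => xs _; apply: eq_bigr => x _; exact: sum_ext.
Qed.

Lemma term_ext n (s1 : S) (xs : {ffun 'I_n -> X}) (ys : {ffun 'I_n -> Y}) x y :
  pj s1 (ext xs x) (ext ys y) * Sg s1 (ext xs x) (ext ys y) =
  pj s1 xs ys * (PX x * b (wenc (stateF s1 xs ys n) x) y) *
  (Sg s1 xs ys + gf (wenc (stateF s1 xs ys n) x) y).
Proof.
rewrite pjoint_ext /Sg big_ord_recr /=; congr (_ * (_ + _)).
  apply: eq_bigr => i _; rewrite !ext_widen stateF_ext //; exact: ltnW.
by rewrite !ext_max stateF_ext.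
Qed.

Lemma xi_ge0 w : 0 <= xiw w.
Proof.
apply: sumr_ge0 => s _; apply: sumr_ge0 => x _; by rewrite mulr_ge0 ?PX_ge0 ?th_ge0.
Qed.

Lemma qf_ge0 y : 0 <= qf y.
Proof. by apply: sumr_ge0 => w _; rewrite mulr_ge0 ?xi_ge0 ?b_ge0. Qed.

Definition hf (w : Wt mx ms) : R := \sum_y b w y * gf w y.
Definition Kf (s : S) : R := \sum_x PX x * hf (wenc s x).

Lemma P1 n :
  \sum_(s1 : S) \sum_(xs : {ffun 'I_n -> X}) \sum_x \sum_(ys : {ffun 'I_n -> Y}) \sum_y
   (pj s1 xs ys * Sg s1 xs ys * (PX x * b (wenc (stateF s1 xs ys n) x) y)) = Vsum n.
Proof.
rewrite /Vsum; apply: eq_bigr => s1 _; apply: eq_bigr => xs _; rewrite exchange_big; apply: eq_bigr => ys _.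
have H1 := sumXY1 (fun x => wenc (stateF s1 xs ys n) x).
transitivity (pj s1 xs ys * Sg s1 xs ys *
   \sum_x \sum_y PX x * b (wenc (stateF s1 xs ys n) x) y); last by rewrite H1 mulr1.
move: (pj s1 xs ys * Sg s1 xs ys) => c.
by rewrite mulr_sumr; apply: eq_bigr => x _; rewrite mulr_sumr.
Qed.

Lemma P2 n :
  \sum_(s1 : S) \sum_(xs : {ffun 'I_n -> X}) \sum_x \sum_(ys : {ffun 'I_n -> Y}) \sum_y
   (pj s1 xs ys * (PX x * b (wenc (stateF s1 xs ys n) x) y) * gf (wenc (stateF s1 xs ys n) x) y)
  = Cst.
Proof.
transitivity (\sum_(s1 : S) \sum_(xs : {ffun 'I_n -> X}) \sum_(ys : {ffun 'I_n -> Y})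
   pj s1 xs ys * Kf (stateF s1 xs ys n)).
  apply: eq_bigr => s1 _; apply: eq_bigr => xs _; rewrite exchange_big; apply: eq_bigr => ys _.
  rewrite /Kf mulr_sumr; apply: eq_bigr => x _; rewrite /hf !mulr_sumr; apply: eq_bigr => y _.
  by rewrite !mulrA.
transitivity (\sum_(ys : {ffun 'I_n -> Y}) \sum_(s1 : S) \sum_(xs : {ffun 'I_n -> X})
   pj s1 xs ys * Kf (stateF s1 xs ys n)).
  transitivity (\sum_(s1 : S) \sum_(ys : {ffun 'I_n -> Y}) \sum_(xs : {ffun 'I_n -> X})
     pj s1 xs ys * Kf (stateF s1 xs ys n)); last exact: exchange_big.
  apply: eq_bigr => s1 _; exact: exchange_big.
transitivity (\sum_(ys : {ffun 'I_n -> Y}) pY PX theta b ys * \sum_w xiw w * hf w).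
  apply: eq_bigr => ys _; rewrite -sumSY.
  transitivity (\sum_w jointWY PX theta b w ys * hf w).
    by rewrite sumWY.
  rewrite mulr_sumr; apply: eq_bigr => w _; by rewrite jointWY_eq mulrA.
by rewrite -mulr_suml pY_total mul1r.
Qed.

Lemma V_eq n : Vsum n = n%:R * Cst.
Proof.
elim: n => [|n IH].
  rewrite mul0r /Vsum big1 // => s1 _; apply: big1 => xs _; apply: big1 => ys _.
  by rewrite /Sg big_ord0 mulr0.
transitivity (Vsum n + Cst); last by rewrite IH -[n.+1]addn1 natrD mulrDl mul1r.
rewrite -(P1 n) -(P2 n) /Vsum -big_split; apply: eq_bigr => s1 _.
rewrite sum_ext2 -big_split; apply: eq_bigr => xs _.
rewrite -big_split; apply: eq_bigr => x _.
rewrite -big_split; apply: eq_bigr => ys _.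
rewrite -big_split; apply: eq_bigr => y _.
by rewrite term_ext mulrDr mulrAC.
Qed.

Lemma MI_T n :
  MI (fun (a : (S * {ffun 'I_n -> X})%type) (ys : {ffun 'I_n -> Y}) => pj a.1 a.2 ys) = Vsum n.
Proof.
rewrite /Vsum pair_bigA /MI; apply: eq_bigr => -[s1 xs] _; apply: eq_bigr => ys _ /=.
case: eqP => [->|/eqP p0]; first by rewrite mul0r.
congr (_ * _).
rewrite marg_ys.
have -> : \sum_(a' : (S * {ffun 'I_n -> X})%type) pj a'.1 a'.2 ys = \prod_(t < n) qf (ys t).
  by rewrite -(pair_bigA _ (fun s1 xs => pj s1 xs ys)) -pY_sum pY_prod.
have pY0 : \prod_(t < n) qf (ys t) != 0.
  rewrite -pY_prod pY_sum; apply/eqP => H.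
  have H1 := psumr_eq0P (fun s _ => sumr_ge0 _ (fun xs _ => pj_ge0 s xs ys)) H.
  have H2 := psumr_eq0P (fun xs _ => pj_ge0 s1 xs ys) (H1 s1 isT).
  by move/eqP: p0; rewrite (H2 xs isT).
move: p0; rewrite /pjoint big_split /= mulrA => p0.
have M0 : theta s1 * \prod_(t < n) PX (xs t) != 0.
  by apply: contraNneq p0 => ->; rewrite mul0r.
have Pb0 : \prod_(t < n) b (wenc (stateF s1 xs ys t) (xs t)) (ys t) != 0.
  by apply: contraNneq p0 => ->; rewrite mulr0.
rewrite invfM mulrACA divff // mul1r -prodf_div ln_prod /Sg //.
move=> t; apply: divr_gt0.
  rewrite lt_def b_ge0 andbT; apply: contraNneq Pb0 => bt0.
  by apply/prodf_eq0; exists t => //; rewrite bt0.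
rewrite lt_def qf_ge0 andbT; apply: contraNneq pY0 => qt0.
by apply/prodf_eq0; exists t => //; rewrite qt0.
Qed.

Lemma Ib_eq : Ib b xiw = Cst.
Proof.
rewrite /Ib /MI /Cst; apply: eq_bigr => w _.
rewrite mulr_sumr; apply: eq_bigr => y _.
have -> : \sum_(b' : Y) xiw w * b w b' = xiw w by rewrite -mulr_sumr sum_b mulr1.
rewrite -/(qf y).
case: eqP => [H|/eqP H]; first by rewrite mulrA H mul0r.
have xw0 : xiw w != 0 by apply: contraNneq H => ->; rewrite mul0r.
by rewrite mulrA /gf invfM mulrACA divff // mul1r.
Qed.

Lemma ext0 (A : Type) (g : {ffun 'I_0 -> A}) a i : ext g a i = a.
Proof. by rewrite ffunE fat_ge. Qed.

Lemma IW_eq : IW1Y1 PX theta b = Ib b xiw.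
Proof.
rewrite /IW1Y1 /Ib; apply: MI_ext => w y.
rewrite /xi mulr_suml; apply: eq_bigr => s1 _.
rewrite sum_ext (sum_ffun0 _ [ffun i : 'I_0 => ord0]) mulr_suml [RHS]big_mkcond /=.
  apply: eq_bigr => x _.
  rewrite big_mkcond sum_ext (sum_ffun0 _ [ffun i : 'I_0 => ord0]) /=.
  rewrite ext0; case: eqP => [<-|_] /=; last by apply: big1.
  rewrite (bigD1 y) //= ext0 eqxx big1 ?addr0.
    by rewrite pjoint_ext /pjoint big_ord0 mulr1 /= mulrA (mulrC (theta s1)).
  by move=> y' /negPf ny; rewrite ext0 ny.
Qed.

End Model.

Theorem lemma6 (R : realType) (mx my ms : nat) (Hxy : (mx <= my)%N)
  (PX : 'I_mx.+1 -> R) (theta : 'I_ms.+1 -> R) (b : Wt mx ms -> 'I_my.+1 -> R) :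
  is_pmf PX -> is_pmf theta -> is_policy b ->
  invariant_for PX theta b ->
  forall T : nat, (0 < T)%N ->
    LT T PX theta b = IW1Y1 PX theta b /\
    IW1Y1 PX theta b = Ib b (xi PX theta).
Proof.
move=> hPX hth hb hinv T T0.
have E2 := IW_eq PX theta b.
have E3 := Ib_eq PX theta hb.
split=> //.
rewrite E2 E3 /LT (MI_T hPX hth hb hinv) (V_eq hPX hth hb hinv) mulrC mulKf //.
by rewrite pnatr_eq0 -lt0n.
Qed.
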